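(* Let $K$ be a field, $\kappa$ an infinite cardinal, $\mathcal R=(R_\alpha\mid\alpha<\kappa)$ a sequence of $K$-algebras, $P=\prod_{\alpha<\kappa}R_\alpha$ and $I=\bigoplus_{\alpha<\kappa}R_\alpha$. Let $R$ be a $K$-algebra containing an ideal $J$ which is isomorphic to $I$ as a $K$-algebra without unit, and assume there is a $K$-algebra isomorphism $R/J\cong K$. Then the $K$-algebras $R$ and $R(\kappa,K,\mathcal R)$ are isomorphic.
   Context: $R(\kappa,K,\mathcal R)$ denotes the $K$-subalgebra $I\oplus 1_P\cdot K$ of $P=\prod_{\alpha<\kappa}R_\alpha$, where $I=\bigoplus_{\alpha<\kappa}R_\alpha$. *)

(* Defs.v *)
From HB Require Import structures.
From mathcomp Require Import all_boot all_algebra.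
From mathcomp Require Import boolp classical_sets cardinality.
Set Implicit Arguments. Unset Strict Implicit. Unset Printing Implicit Defensive.
Import GRing.Theory.
Local Open Scope ring_scope.
Local Open Scope classical_set_scope.

Definition Pi (K : fieldType) (A : Type) (R_ : A -> algType K) : Type :=
  forall a : A, R_ a.

Section ProdOps.
Variables (K : fieldType) (A : Type) (R_ : A -> algType K).
Definition Pi_add (x y : Pi R_) : Pi R_ := fun a => x a + y a.
Definition Pi_mul (x y : Pi R_) : Pi R_ := fun a => x a * y a.
Definition Pi_scale (k : K) (x : Pi R_) : Pi R_ := fun a => k *: x a.
Definition Pi_one : Pi R_ := fun a => 1.
Definition Pi_const (k : K) : Pi R_ := fun a => k%:A.

Definition in_I (x : Pi R_) : Prop := finite_set [set a | x a != 0].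

Definition in_RkKR (x : Pi R_) : Prop :=
  exists k : K, exists y : Pi R_, in_I y /\ x = Pi_add y (Pi_const k).
End ProdOps.

Definition is_ideal (K : fieldType) (R : algType K) (J : set R) : Prop :=
  J 0 /\ (forall x y, J x -> J y -> J (x + y)) /\
  (forall (k : K) x, J x -> J (k *: x)) /\
  (forall r x, J x -> J (r * x) /\ J (x * r)).

(* Main.v *)
Require Import Defs.
From HB Require Import structures.
From mathcomp Require Import all_boot all_algebra.
From mathcomp Require Import boolp classical_sets cardinality.
Import GRing.Theory.
Local Open Scope ring_scope.
Local Open Scope classical_set_scope.

Lemma aux (K : fieldType) (R : algType K) (x y : R) (a b : K) :
  (x + a *: 1) * (y + b *: 1) - (a * b) *: 1 = x * y + (a *: y + b *: x).
Proof.
rewrite mulrDl !mulrDr -!scalerAl -!scalerAr !mul1r !mulr1 scalerA.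
by rewrite addrA addrK -addrA; congr (_ + _); exact: addrC.
Qed.

Theorem lemma4p5 (K : fieldType) (A : Type) (hA : infinite_set [set: A])
  (R_ : A -> algType K) (R : algType K) (J : set R)
  (hJ : is_ideal J)
  (* J is isomorphic to I as a K-algebra without unit *)
  (f : R -> Pi R_)
  (hf_in : forall r, J r -> in_I (f r))
  (hf_inj : forall r s, J r -> J s -> f r = f s -> r = s)
  (hf_surj : forall x, in_I x -> exists2 r, J r & f r = x)
  (hf_add : forall r s, J r -> J s -> f (r + s) = Pi_add (f r) (f s))
  (hf_mul : forall r s, J r -> J s -> f (r * s) = Pi_mul (f r) (f s))
  (hf_scale : forall (k : K) r, J r -> f (k *: r) = Pi_scale k (f r))
  (* R/J is isomorphic to K as K-algebras: a surjective unital K-algebra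
     morphism R -> K with kernel exactly J *)
  (phi : R -> K)
  (hphi_add : forall r s, phi (r + s) = phi r + phi s)
  (hphi_mul : forall r s, phi (r * s) = phi r * phi s)
  (hphi_scale : forall (k : K) r, phi (k *: r) = k * phi r)
  (hphi_one : phi 1 = 1)
  (hphi_surj : forall k : K, exists r, phi r = k)
  (hphi_ker : forall r, phi r = 0 <-> J r) :
  (* R is isomorphic to R(kappa,K,R) as K-algebras *)
  exists g : R -> Pi R_,
    (forall r, in_RkKR (g r)) /\
        injective g /\
        (forall x, in_RkKR x -> exists r, g r = x) /\
        (forall r s, g (r + s) = Pi_add (g r) (g s)) /\
        (forall r s, g (r * s) = Pi_mul (g r) (g s)) /\
        (forall (k : K) r, g (k *: r) = Pi_scale k (g r)) /\
        g 1 = Pi_one R_.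
Proof.
have [J0 [JD [JZ JM]]] := hJ.
have JN : forall x, J x -> J (- x).
  by move=> x Jx; rewrite -scaleN1r; apply: JZ.
pose j r := r - phi r *: (1:R).
have Jj : forall r, J (j r).
  move=> r; apply/hphi_ker; rewrite /j hphi_add.
  have -> : - (phi r *: (1:R)) = (- phi r) *: 1 by rewrite scaleNr.
  by rewrite hphi_scale hphi_one mulr1 subrr.
have f0 : forall a, f 0 a = 0.
  move=> a; have := @hf_add 0 0 J0 J0; rewrite addr0 => /(congr1 (fun h => h a)).
  rewrite /Pi_add => E; apply: (@addrI _ (f 0 a)); rewrite addr0; exact: esym E.
exists (fun r => Pi_add (f (j r)) (Pi_const R_ (phi r))).
split; first by move=> r; exists (phi r), (f (j r)); split => //; apply: hf_in.
split.
  move=> r s E.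
  have Hfin : finite_set ([set a | f (j r) a != 0] `|` [set a | f (j s) a != 0]).
    by rewrite finite_setU; split; apply: hf_in.
  have [a Ha] : exists a, ~ ([set a | f (j r) a != 0] `|` [set a | f (j s) a != 0]) a.
    apply/not_existsP => H; apply: hA; apply: sub_finite_set Hfin => x _.
    by apply: contrapT; apply: H.
  have Ea := congr1 (fun h => h a) E; rewrite /Pi_add /Pi_const /= in Ea.
  have ra : f (j r) a = 0 by apply: contrapT => H; apply: Ha; left; rewrite /=; apply/eqP.
  have sa : f (j s) a = 0 by apply: contrapT => H; apply: Ha; right; rewrite /=; apply/eqP.
  rewrite ra sa !add0r in Ea.
  have ps : phi r = phi s.
    apply/eqP; rewrite -subr_eq0; apply/eqP; apply: contrapT => Hne.
    have : (phi r - phi s) *: (1 : R_ a) = 0 by rewrite scalerBl Ea subrr.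
    move/(congr1 (fun v => (phi r - phi s)^-1 *: v)).
    rewrite scalerA mulVf; last by apply/eqP.
    by rewrite scale1r scaler0 => /eqP; rewrite oner_eq0.
  have E2 : f (j r) = f (j s).
    apply: functional_extensionality_dep => b.
    have Eb := congr1 (fun h => h b) E; rewrite /Pi_add /Pi_const /= ps in Eb.
    exact: (addIr _ Eb).
  have := @hf_inj _ _ (Jj r) (Jj s) E2; rewrite /j ps.
  by move/(congr1 (fun v => v + phi s *: (1:R))); rewrite !subrK.
split.
  move=> x [k [y [Iy ->]]].
  have [s Js fs] := @hf_surj _ Iy.
  have pk : phi (s + k *: 1) = k.
    rewrite hphi_add hphi_scale hphi_one mulr1.
    by have /hphi_ker -> := Js; rewrite add0r.
  exists (s + k *: 1); rewrite /j /= pk addrK fs //.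
split.
  move=> r s; rewrite hphi_add.
  have -> : j (r + s) = j r + j s by rewrite /j /= hphi_add scalerDl opprD addrACA.
  rewrite hf_add //; apply: functional_extensionality_dep => a.
  rewrite /Pi_add /Pi_const scalerDl addrACA //.
split.
  move=> r s; rewrite hphi_mul.
  have Er : r = j r + phi r *: 1 by rewrite /j subrK.
  have Es : s = j s + phi s *: 1 by rewrite /j subrK.
  have -> : j (r * s) = j r * j s + (phi r *: j s + phi s *: j r).
    by rewrite -(@aux _ _ (j r) (j s) (phi r) (phi s)) -Er -Es /j /= hphi_mul.
  rewrite hf_add; [|by case: (JM (j r) _ (Jj s))| by apply: JD; apply: JZ].
  rewrite (hf_mul _ _ (Jj r) (Jj s)) (hf_add _ _ (JZ _ _ (Jj s)) (JZ _ _ (Jj r))).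
  rewrite (hf_scale _ _ (Jj s)) (hf_scale _ _ (Jj r)).
  apply: functional_extensionality_dep => a.
  rewrite /Pi_add /Pi_mul /Pi_const /Pi_scale.
  by rewrite -[in LHS](@aux _ _ (f (j r) a) (f (j s) a) (phi r) (phi s)) subrK.
split.
  move=> k r; rewrite hphi_scale.
  have -> : j (k *: r) = k *: j r by rewrite /j /= hphi_scale scalerBr scalerA.
  rewrite hf_scale //; apply: functional_extensionality_dep => a.
  by rewrite /Pi_add /Pi_const /Pi_scale scalerDr scalerA.
rewrite hphi_one.
have -> : j 1 = 0 by rewrite /j /= hphi_one scale1r subrr.
apply: functional_extensionality_dep => a.
by rewrite /Pi_add /Pi_const /Pi_one f0 add0r scale1r.
Qed.
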